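(* Let $(\mathcal A,\varphi,\mathcal F,\Phi)$ be a ncps of type B$'$ with associated algebra $\mathcal B$ and functional $\varphi$ on $\mathcal B$. For $i\in I$ let $\mathcal A_i$ be a subalgebra of $\mathcal A$ containing $1_{\mathcal A}$, $\mathcal F_i$ a subalgebra of $\mathcal F$, and $\mathcal B_i=\mathcal A_i\langle\mathcal F_i\rangle$ the subalgebra of $\mathcal B$ generated by $\mathcal A_i\oplus\mathcal F_i$. Let $P\in\mathcal F$ with $\Phi(P)\ne0$ and $\mathcal F_P:=\{cP^n: n\in\mathbb N,c\in\mathbb C\}$. Assume that $((\mathcal A_i)_{i\in I},(\mathcal F_i)_{i\in I\sqcup\{P\}})$ is weakly B$'$-free. Then $(\mathcal B_i)_{i\in I}$ are conditionally free with respect to $(\varphi,\varphi_P)$ if and only if $(\mathcal F_i)_{i\in I}$ are Boolean independent with respect to $\varphi_P$.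
   Context: Ncps of type B$'$ $(\mathcal A,\varphi,\mathcal F,\Phi)$: $\mathcal A$ unital complex algebra, $\varphi(1_{\mathcal A})=1$, $\mathcal F$ an algebra which is an $\mathcal A$-bimodule compatible with its multiplication, $\Phi:\mathcal F\to\mathbb C$ linear. $\mathcal B=\mathcal A\oplus\mathcal F$ with product $(a_1,f_1)(a_2,f_2)=(a_1a_2,a_1f_2+f_1a_2+f_1f_2)$, unit $1_{\mathcal A}$; $\varphi(a+f):=\varphi(a)$, $\varphi'(a+f):=\Phi(f)$. For $P\in\mathcal F$ with $\Phi(P)\neq0$, $\varphi_P(b):=\Phi(Pb)/\Phi(P)$ for $b\in\mathcal B$ (note $Pb\in\mathcal F$). Weak B$'$-freeness of $((\mathcal A_i)_{i\in I},(\mathcal F_j)_{j\in J})$: the $\mathcal A_i$ are free w.r.t. $\varphi$ ($\varphi(c_1\cdots c_n)=0$ for alternating indices and centered $c_l\in\mathcal A_{i_l}$), and with $\mathcal A_0$ the algebra generated by all $\mathcal A_i$ and $\mathcal F_0$ the algebra generated by all $\mathcal F_j$, $\Phi(c_0g_1c_1\cdots c_{n-1}g_nc_n)=\varphi(c_0c_n)\prod_{l=1}^{n-1}\varphi(c_l)\Phi(g_1\cdots g_n)$ for all $n\ge1$, $c_l\in\mathcal A_0$, $g_l\in\mathcal F_0$. Subalgebras $(\mathcal C_i)$ (not necessarily unital) are Boolean independent w.r.t. a functional $\psi$ if $\psi(c_1\cdots c_n)=\psi(c_1)\cdots\psi(c_n)$ whenever $i_1\ne i_2\ne\cdots\ne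 i_n$, $c_l\in\mathcal C_{i_l}$. Unital subalgebras $(\mathcal B_i)$ are conditionally free w.r.t. $(\varphi,\psi)$ if they are free w.r.t. $\varphi$ and $\psi(b_1\cdots b_n)=\psi(b_1)\cdots\psi(b_n)$ whenever $n\ge1$, $i_1\ne\cdots\ne i_n$, $b_l\in\mathcal B_{i_l}$, $\varphi(b_l)=0$. *)

(* Defs.v *)
(* Complex scalars are modelled as R[i] = complex R for
   R : realType (a complete archimedean ordered field, i.e. a copy of the
   reals), so R[i] is a copy of the complex numbers. *)
From HB Require Import structures.
From mathcomp Require Import all_boot all_order all_algebra.
From mathcomp Require Import reals.
From mathcomp Require Export complex.
Set Implicit Arguments. Unset Strict Implicit. Unset Printing Implicit Defensive.
Import Order.TTheory GRing.Theory Num.Theory.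
Local Open Scope ring_scope.

Section NCPS.
Variable (K : fieldType) (B : algType K).

Definition lin_functional (f : B -> K) : Prop :=
  forall (a : K) (x y : B), f (a *: x + y) = a * f x + f y.

Definition subalg (S : B -> Prop) : Prop :=
  [/\ S 0, (forall x y, S x -> S y -> S (x + y)),
      (forall (c : K) x, S x -> S (c *: x)) &
      (forall x y, S x -> S y -> S (x * y))].

Inductive gen_alg (S : B -> Prop) : B -> Prop :=
  | gen_base x : S x -> gen_alg S x
  | gen_zero : gen_alg S 0
  | gen_add x y : gen_alg S x -> gen_alg S y -> gen_alg S (x + y)
  | gen_scale (c : K) x : gen_alg S x -> gen_alg S (c *: x)
  | gen_mul x y : gen_alg S x -> gen_alg S y -> gen_alg S (x * y).

Definition gen_ualg (S : B -> Prop) : B -> Prop :=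
  gen_alg (fun x => x = 1 \/ S x).

(* An ncps of type B' (A, phi, F, Phi), presented inside its associated
   algebra B = A (+) F: A is a unital subalgebra, F a subalgebra which is
   an A-bimodule (i.e. A F, F A are contained in F), B is the direct sum
   A (+) F (this makes the product of B exactly
   (a1,f1)(a2,f2) = (a1a2, a1f2 + f1a2 + f1f2)).
   phi : B -> K is the extension phi(a + f) = phi(a) with phi(1) = 1, and
   Phi is a linear functional (only its values on F are ever used). *)
Definition is_ncpsB' (A F : B -> Prop) (phi Phi : B -> K) : Prop :=
  [/\ subalg A /\ A 1,
      subalg F /\
      (forall a f, A a -> F f -> F (a * f) /\ F (f * a)),
      (forall b, exists a f, [/\ A a, F f & b = a + f]) /\
        (forall x, A x -> F x -> x = 0),
      [/\ lin_functional phi, phi 1 = 1 & forall f, F f -> phi f = 0] &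
      lin_functional Phi].

Section Indep.
Variable (I : Type).

Definition alternating (n : nat) (i : nat -> I) : Prop :=
  forall k, (k.+1 < n)%N -> i k <> i k.+1.

Definition free (Ai : I -> B -> Prop) (phi : B -> K) : Prop :=
  forall (n : nat) (i : nat -> I) (c : nat -> B),
    (0 < n)%N -> alternating n i ->
    (forall k, (k < n)%N -> Ai (i k) (c k) /\ phi (c k) = 0) ->
    phi (\prod_(0 <= k < n) c k) = 0.

Definition boolean_indep (Ci : I -> B -> Prop) (psi : B -> K) : Prop :=
  forall (n : nat) (i : nat -> I) (c : nat -> B),
    (0 < n)%N -> alternating n i ->
    (forall k, (k < n)%N -> Ci (i k) (c k)) ->
    psi (\prod_(0 <= k < n) c k) = \prod_(0 <= k < n) psi (c k).

Definition cond_free (Bi : I -> B -> Prop) (phi psi : B -> K) : Prop :=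
  free Bi phi /\
  forall (n : nat) (i : nat -> I) (b : nat -> B),
    (0 < n)%N -> alternating n i ->
    (forall k, (k < n)%N -> Bi (i k) (b k) /\ phi (b k) = 0) ->
    psi (\prod_(0 <= k < n) b k) = \prod_(0 <= k < n) psi (b k).
End Indep.

Definition weakly_B'_free (I J : Type) (Ai : I -> B -> Prop)
    (Fj : J -> B -> Prop) (phi Phi : B -> K) : Prop :=
  let A0 := gen_ualg (fun x => exists i, Ai i x) in
  let F0 := gen_alg (fun x => exists j, Fj j x) in
  free Ai phi /\
  forall (n : nat) (c g : nat -> B),
    (0 < n)%N ->
    (forall l, (l <= n)%N -> A0 (c l)) ->
    (forall l, (0 < l <= n)%N -> F0 (g l)) ->
    Phi (c 0%N * \prod_(1 <= l < n.+1) (g l * c l)) =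
      phi (c 0%N * c n) * (\prod_(1 <= l < n) phi (c l)) *
      Phi (\prod_(1 <= l < n.+1) g l).

Definition gen_AF (Ai Fi : B -> Prop) : B -> Prop :=
  gen_alg (fun x => exists a f, [/\ Ai a, Fi f & x = a + f]).

Definition phiP (Phi : B -> K) (P : B) (b : B) : K := Phi (P * b) / Phi P.

Definition F_P (P : B) : B -> Prop :=
  fun x => exists (n : nat) (c : K), (0 < n)%N /\ x = c *: P ^+ n.

End NCPS.

(* Main.v *)
Require Import Defs.
From HB Require Import structures.
From mathcomp Require Import all_boot all_order all_algebra.
From mathcomp Require Import reals complex.
From mathcomp Require Import ring.
From Stdlib Require Import Classical FunctionalExtensionality.
Set Implicit Arguments. Unset Strict Implicit. Unset Printing Implicit Defensive.
Import Order.TTheory GRing.Theory Num.Theory.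
Local Open Scope ring_scope.

Section Gen.
Variables (K : fieldType) (B : algType K).

Lemma linD (f : B -> K) : lin_functional f -> forall x y, f (x + y) = f x + f y.
Proof. by move=> h x y; rewrite -[x in LHS]scale1r h mul1r. Qed.
Lemma lin0 (f : B -> K) : lin_functional f -> f 0 = 0.
Proof.
move=> h; have e := linD h 0 0; rewrite addr0 in e.
by apply: (addrI (f 0)); rewrite addr0 -e.
Qed.
Lemma linZ (f : B -> K) : lin_functional f -> forall c x, f (c *: x) = c * f x.
Proof. by move=> h c x; rewrite -[c *: x]addr0 h lin0 // addr0. Qed.

Lemma sub_opp (S : B -> Prop) : subalg S -> forall x y, S x -> S y -> S (x - y).
Proof.
case=> _ hD hZ _ x y hx hy; rewrite -scaleN1r; exact: hD (hZ _ _ hy).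
Qed.

Lemma prod_split (T : pzRingType) (G : nat -> T) n m : (m < n)%N ->
  \prod_(0 <= k < n) G k = (\prod_(0 <= k < m) G k) * G m * \prod_(m.+1 <= k < n) G k.
Proof.
move=> hm; rewrite (big_cat_nat (leq0n m) (ltnW hm)) /= (big_ltn hm) mulrA //.
Qed.

Definition upd (T : Type) (b : nat -> T) m x := fun k => if k == m then x else b k.

Lemma prod_upd (T : pzRingType) (G : nat -> T) n m x : (m < n)%N ->
  \prod_(0 <= k < n) upd G m x k = (\prod_(0 <= k < m) G k) * x * \prod_(m.+1 <= k < n) G k.
Proof.
move=> hm; rewrite (prod_split _ hm) /upd eqxx; congr (_ * _ * _); apply: eq_big_nat.
  by move=> k /andP[_ h]; rewrite ltn_eqF.
by move=> k /andP[h _]; rewrite gtn_eqF.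
Qed.

Lemma prod_upd_map (U : Type) (T : pzRingType) (f : U -> T) (b : nat -> U) n m x : (m < n)%N ->
  \prod_(0 <= k < n) f (upd b m x k) = (\prod_(0 <= k < m) f (b k)) * f x * \prod_(m.+1 <= k < n) f (b k).
Proof.
move=> hm; rewrite (prod_split _ hm) /upd eqxx; congr (_ * _ * _); apply: eq_big_nat.
  by move=> k /andP[_ h]; rewrite ltn_eqF.
by move=> k /andP[h _]; rewrite gtn_eqF.
Qed.

Lemma prod_snoc_map (U : Type) (T : pzRingType) (f : U -> T) (c : nat -> U) x m :
  \prod_(0 <= k < m.+1) f (upd c m x k) = (\prod_(0 <= k < m) f (c k)) * f x.
Proof.
rewrite big_nat_recr //= /upd eqxx; congr (_ * _); apply: eq_big_nat => k /andP[_ h].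
by rewrite ltn_eqF.
Qed.

Inductive Span (S : B -> Prop) : B -> Prop :=
 | sp_base x : S x -> Span S x
 | sp_zero : Span S 0
 | sp_add x y : Span S x -> Span S y -> Span S (x + y)
 | sp_scale c x : Span S x -> Span S (c *: x).

Definition multilin n (Ph : (nat -> B) -> K) :=
  forall m b c x y, (m < n)%N ->
    Ph (upd b m (c *: x + y)) = c * Ph (upd b m x) + Ph (upd b m y).

Lemma multilin_ext n Ph (Sk : nat -> B -> Prop) : multilin n Ph ->
  (forall b, (forall k, (k < n)%N -> Sk k (b k)) -> Ph b = 0) ->
  forall b, (forall k, (k < n)%N -> Span (Sk k) (b k)) -> Ph b = 0.
Proof.
move=> hml h0.
have claim : forall m b, (forall k, (k < n)%N -> (k < m)%N -> Span (Sk k) (b k)) ->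
   (forall k, (k < n)%N -> (m <= k)%N -> Sk k (b k)) -> Ph b = 0.
  elim=> [|m IH] b h1 h2; first by apply: h0 => k hk; exact: h2.
  case: (ltnP m n) => hmn; last first.
    apply: IH => k hk hkm; last by exfalso; move: (leq_trans hmn hkm); rewrite leqNgt hk.
    by apply: h1 => //; exact: ltnW.
  have -> : b = upd b m (b m) by apply: functional_extensionality => k; rewrite /upd; case: eqP => // ->.
  have hz : Ph (upd b m 0) = 0.
    have e := hml m b 1 0 0 hmn; rewrite scale1r addr0 mul1r in e.
    by apply: (addrI (Ph (upd b m 0))); rewrite addr0 -e.
  have := h1 m hmn (ltnSn m); elim=> [x hx| |x y _ hx _ hy|c x _ hx].
  - apply: IH => k hk hkm; rewrite /upd.
    + by rewrite (ltn_eqF hkm); apply: h1 => //; exact: ltnW.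
    + case: (k =P m) => [-> //|ne]. apply: h2 => //; rewrite ltn_neqAle hkm andbT; apply/eqP=> e; exact: ne (esym e).
  - exact: hz.
  - by rewrite -[x]scale1r hml // hx hy mulr0 addr0.
  - by rewrite -[c *: x]addr0 hml // hx hz mulr0 addr0.
move=> b hb; apply: (claim n b) => [k hk _|k hk]; first exact: hb.
by rewrite leqNgt hk.
Qed.

Lemma Span_mono (S S' : B -> Prop) x : (forall y, S y -> S' y) -> Span S x -> Span S' x.
Proof.
move=> h; elim=> [y /h|||]; [exact: sp_base|exact: sp_zero|move=> *; exact: sp_add|move=> *; exact: sp_scale].
Qed.

Lemma Span_mul (S : B -> Prop) x y : (forall x y, S x -> S y -> S (x * y)) ->
  Span S x -> Span S y -> Span S (x * y).
Proof.
move=> hS hx; elim: hx y => [x' hx'|| x1 x2 _ IH1 _ IH2|c x' _ IH] y hy.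
- elim: hy => [y' hy'|| y1 y2 _ IH1 _ IH2|c y' _ IH].
  + by apply: sp_base; apply: hS.
  + by rewrite mulr0; apply: sp_zero.
  + by rewrite mulrDr; apply: sp_add.
  + by rewrite -scalerAr; apply: sp_scale.
- by rewrite mul0r; apply: sp_zero.
- by rewrite mulrDl; apply: sp_add; [apply: IH1|apply: IH2].
- by rewrite -scalerAl; apply: sp_scale; apply: IH.
Qed.

End Gen.

Section Main.
Variables (K : fieldType) (B : algType K) (A F : B -> Prop) (phi Phi : B -> K).
Variables (I : Type) (Ai Fi : I -> B -> Prop) (P : B).
Hypothesis Hncps : is_ncpsB' A F phi Phi.
Hypothesis HAi : forall i, [/\ subalg (Ai i), Ai i 1 & forall x, Ai i x -> A x].
Hypothesis HFi : forall i, subalg (Fi i) /\ forall x, Fi i x -> F x.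
Hypothesis HP : F P.
Hypothesis HPhiP : Phi P != 0.
Hypothesis Hfree : Defs.free Ai phi.
Definition A0 := gen_ualg (fun x => exists i, Ai i x).
Definition Fj := fun j : option I => match j with Some i => Fi i | None => F_P P end.
Definition F0 := gen_alg (fun x => exists j, Fj j x).
Hypothesis Hwf : forall (n : nat) (c g : nat -> B),
    (0 < n)%N ->
    (forall l, (l <= n)%N -> A0 (c l)) ->
    (forall l, (0 < l <= n)%N -> F0 (g l)) ->
    Phi (c 0%N * \prod_(1 <= l < n.+1) (g l * c l)) =
      phi (c 0%N * c n) * (\prod_(1 <= l < n) phi (c l)) *
      Phi (\prod_(1 <= l < n.+1) g l).

Lemma phi_lin : lin_functional phi. Proof. by case: Hncps => _ _ _ []. Qed.
Lemma Phi_lin : lin_functional Phi. Proof. by case: Hncps. Qed.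
Lemma phi1 : phi 1 = 1. Proof. by case: Hncps => _ _ _ []. Qed.
Lemma phiF f : F f -> phi f = 0. Proof. by case: Hncps => _ _ _ [_ _ h] _; apply: h. Qed.
Lemma F_sub : subalg F. Proof. by case: Hncps => _ []. Qed.

Lemma F_ideal f x : F f -> F (x * f) /\ F (f * x).
Proof.
case: Hncps => _ [[_ hD _ hM] hbi] [hdec _] _ _ hf.
have [a [g [ha hg ->]]] := hdec x.
have [h1 h2] := hbi a f ha hf.
by rewrite mulrDl mulrDr; split; apply: hD => //; apply: hM.
Qed.

Lemma Ai_A0 i x : Ai i x -> A0 x.
Proof. by move=> h; apply: gen_base; right; exists i. Qed.
Lemma A0_1 : A0 1. Proof. by apply: gen_base; left. Qed.
Lemma A0_mul x y : A0 x -> A0 y -> A0 (x * y). Proof. exact: gen_mul. Qed.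
Lemma Fi_F0 i x : Fi i x -> F0 x.
Proof. by move=> h; apply: gen_base; exists (Some i). Qed.
Lemma P_F0 : F0 P.
Proof. by apply: gen_base; exists None; exists 1%N, 1; rewrite expr1 scale1r. Qed.

Inductive Chain (CA GF : B -> Prop) : K -> B -> B -> Prop :=
 | ch_base g : GF g -> Chain CA GF 1 g g
 | ch_snoc l y x c g : Chain CA GF l y x -> CA c -> GF g ->
      Chain CA GF (l * phi c) (y * g) (x * c * g).

Lemma chain_mono (CA GF CA' GF' : B -> Prop) l y x :
  (forall x, CA x -> CA' x) -> (forall x, GF x -> GF' x) ->
  Chain CA GF l y x -> Chain CA' GF' l y x.
Proof.
move=> h1 h2; elim=> [g hg|l' y' x' c g _ IH hc hg]; first by apply: ch_base; auto.
by apply: ch_snoc; auto.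
Qed.

Lemma chain_y (CA GF : B -> Prop) l y x : subalg GF -> Chain CA GF l y x -> GF y.
Proof. by case=> _ _ _ hM; elim=> // l' y' x' c g _ IH _ hg; apply: hM. Qed.

Lemma chain_F (CA GF : B -> Prop) l y x : (forall x, GF x -> F x) -> Chain CA GF l y x -> F x.
Proof.
by move=> h; elim=> [g /h //|l' y' x' c g _ IH _ /h hg]; have [] := F_ideal (x' * c) hg.
Qed.

Lemma chain_cat (CA GF : B -> Prop) l y x m z u c :
  Chain CA GF l y x -> Chain CA GF m z u -> CA c ->
  Chain CA GF (l * phi c * m) (y * z) (x * c * u).
Proof.
move=> hx hu hc; elim: hu => [g hg|m' z' u' c' g _ IH hc' hg].
  by rewrite mulr1; apply: ch_snoc.
have := ch_snoc IH hc' hg; by rewrite !mulrA.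
Qed.

Lemma chain_seq l y x : Chain A0 F0 l y x ->
  exists n (cc gg : nat -> B), [/\ (0 < n)%N, (forall k, (0 < k < n)%N -> A0 (cc k)),
    (forall k, (0 < k <= n)%N -> F0 (gg k)),
    l = \prod_(1 <= k < n) phi (cc k) & y = \prod_(1 <= k < n.+1) gg k] /\
    forall c1, x * c1 = \prod_(1 <= k < n.+1) (gg k * (if k == n then c1 else cc k)).
Proof.
elim=> [g hg|l' y' x' c g _ [n [cc [gg [[hn hA hF hl hy] hx]]]] hc hg].
  exists 1%N, (fun _ => 0), (fun _ => g); split; first split.
  - by [].
  - by move=> k /andP[k0 k1]; move: (leq_trans k0 k1).
  - by [].
  - by rewrite big_geq.
  - by rewrite big_nat1.
  - by move=> c1; rewrite big_nat1.
exists n.+1, (upd cc n c), (upd gg n.+1 g); split; first split => //.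
- move=> k /andP[k0 kn]; rewrite /upd; case: (k =P n) => [_|ne]; first done.
  by apply: hA; rewrite k0 /= ltn_neqAle -ltnS kn andbT; apply/eqP.
- move=> k /andP[k0 kn]; rewrite /upd; case: (k =P n.+1) => [_|ne]; first done.
  by apply: hF; rewrite k0 /= -ltnS ltn_neqAle kn andbT; apply/eqP.
- rewrite big_nat_recr //= /upd eqxx hl; congr (_ * _); apply: eq_big_nat => k /andP[_ kn].
  by rewrite ltn_eqF.
- rewrite big_nat_recr //= /upd eqxx hy; congr (_ * _); apply: eq_big_nat => k /andP[_ kn].
  by rewrite ltn_eqF.
move=> c1; rewrite big_nat_recr //= /upd !eqxx.
rewrite (eq_big_nat _ _ (F2 := fun k => gg k * (if k == n then c else cc k))); last first.
  by move=> k /andP[_ kn]; rewrite ltn_eqF.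
by rewrite -hx !mulrA.
Qed.

Lemma chain_Phi l y x c0 c1 : Chain A0 F0 l y x -> A0 c0 -> A0 c1 ->
  Phi (c0 * x * c1) = phi (c0 * c1) * l * Phi y.
Proof.
move=> /chain_seq [n [cc [gg [[hn hA hF hl hy] hx]]]] h0 h1.
pose c' := fun k => if k == 0%N then c0 else if k == n then c1 else cc k.
have := @Hwf n c' gg hn _ hF.
have e1 : \prod_(1 <= l < n.+1) (gg l * c' l) = x * c1.
  rewrite hx; apply: eq_big_nat => k /andP[k0 _]; rewrite /c'.
  by rewrite eqn0Ngt k0.
have e2 : \prod_(1 <= l < n) phi (c' l) = l.
  rewrite hl; apply: eq_big_nat => k /andP[k0 kn]; rewrite /c'.
  by rewrite eqn0Ngt k0 ltn_eqF.
rewrite e1 e2 -hy /c' eqxx eqn0Ngt hn /= eqxx mulrA; apply.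
move=> k kn; rewrite /c'; case: (k =P 0%N) => [_|ne0]; first exact: h0.
case: (k =P n) => [_|ne]; first exact: h1.
apply: hA; rewrite lt0n ltn_neqAle kn andbT; apply/andP; split; exact/eqP.
Qed.

Local Notation psi := (phiP Phi P).

Lemma chainP : Chain A0 F0 1 P P. Proof. exact: ch_base P_F0. Qed.

Lemma psi_A0 a : A0 a -> psi a = phi a.
Proof.
move=> ha; have := chain_Phi chainP A0_1 ha; rewrite !mul1r mulr1 /phiP => ->.
by rewrite mulfK.
Qed.

Lemma psi_word l y x a0 am : Chain A0 F0 l y x -> A0 a0 -> A0 am ->
  psi (a0 * x * am) = phi a0 * l * phi am * psi y.
Proof.
move=> hx h0 hm; have hc := chain_cat chainP hx h0.
have e := chain_Phi hc A0_1 hm; rewrite !mul1r in e.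
rewrite /phiP; have -> : P * (a0 * x * am) = P * a0 * x * am by rewrite !mulrA.
rewrite e; ring.
Qed.

Definition CS m (ic : nat -> I) (c : nat -> B) :=
  alternating m ic /\ forall k, (k < m)%N -> Ai (ic k) (c k) /\ phi (c k) = 0.
Definition lastc a j := a = 1 \/ exists j', j' <> j /\ Ai j' a.
Definition ncons T (x : T) (f : nat -> T) : nat -> T :=
  fun k => if k is k'.+1 then f k' else x.

Lemma prod_ncons (x : B) f m :
  \prod_(0 <= k < m.+1) ncons x f k = x * \prod_(0 <= k < m) f k.
Proof. by rewrite big_nat_recl. Qed.

Lemma prod_snoc (c : nat -> B) x m :
  \prod_(0 <= k < m.+1) upd c m x k = (\prod_(0 <= k < m) c k) * x.
Proof.
rewrite big_nat_recr //= /upd eqxx; congr (_ * _); apply: eq_big_nat => k /andP[_ h].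
by rewrite ltn_eqF.
Qed.

Lemma CS_cons m ic c j x : CS m ic c -> Ai j x -> phi x = 0 ->
  ((0 < m)%N -> j <> ic 0%N) -> CS m.+1 (ncons j ic) (ncons x c).
Proof.
move=> [ha hc] hx hx0 hj; split.
  by case=> [|k] /= hk; [apply: hj | apply: ha].
by case=> [|k] /= hk; [split | apply: hc].
Qed.

Lemma CS_snoc m ic c j x : CS m ic c -> Ai j x -> phi x = 0 ->
  ((0 < m)%N -> ic m.-1 <> j) -> CS m.+1 (upd ic m j) (upd c m x).
Proof.
move=> [ha hc] hx hx0 hj; split.
  move=> k hk; have hk' : (k < m)%N by rewrite -ltnS.
  rewrite /upd (ltn_eqF hk'); case: (k.+1 =P m) => [e|ne].
    by move: hj; rewrite -e; apply.
  by apply: ha; rewrite ltn_neqAle hk' andbT; apply/eqP.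
move=> k hk; rewrite /upd; case: (k =P m) => [_|ne]; first by split.
by apply: hc; rewrite ltn_neqAle -ltnS hk andbT; apply/eqP.
Qed.

Definition cen a := a - phi a *: 1.

Lemma cenE a : a = cen a + phi a *: 1. Proof. by rewrite /cen subrK. Qed.
Lemma cen_phi a : phi (cen a) = 0.
Proof.
rewrite /cen -scaleNr addrC (phi_lin) phi1 mulr1; exact: addNr.
Qed.
Lemma cen_A j a : Ai j a -> Ai j (cen a).
Proof.
move=> ha; have [hs h1 _] := HAi j; apply: sub_opp => //.
by case: hs => _ _ hZ _; apply: hZ.
Qed.

Lemma phiD x y : phi (x + y) = phi x + phi y. Proof. have h := phi_lin; exact: (linD h). Qed.
Lemma phiZ c x : phi (c *: x) = c * phi x. Proof. have h := phi_lin; exact: (linZ h). Qed.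

Lemma free_core m ic c a : (0 < m)%N -> CS m ic c -> lastc a (ic m.-1) ->
  phi ((\prod_(0 <= k < m) c k) * a) = 0.
Proof.
move=> hm [ha hc] [->|[j' [hj hj']]]; first by rewrite mulr1; exact: Hfree hm ha hc.
rewrite (cenE a) mulrDr -scalerAr mulr1 phiD phiZ.
rewrite (Hfree hm ha hc) mulr0 addr0 -prod_snoc.
have [ha' hc'] := CS_snoc (conj ha hc) (cen_A hj') (cen_phi a) (fun _ e => hj (esym e)).
exact: Hfree ha' hc'.
Qed.

Definition Dfree v (Q : I -> Prop) := forall m ic c a, (0 < m)%N -> CS m ic c ->
  Q (ic 0%N) -> lastc a (ic m.-1) -> phi (v * (\prod_(0 <= k < m) c k) * a) = 0.

Lemma Dfree1 : Dfree 1 (fun _ => True).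
Proof. by move=> m ic c a hm hc _ hl; rewrite mul1r; apply: free_core hl. Qed.

Lemma Dfree_a j a : Ai j a -> Dfree a (fun x => x <> j).
Proof.
move=> ha [//|m] ic c a' _ hc hQ hl.
rewrite (cenE a) mulrDl -scalerAl mul1r mulrDl -scalerAl phiD phiZ.
rewrite (free_core _ hc hl) // mulr0 addr0 -prod_ncons.
have hc' := CS_cons hc (cen_A ha) (cen_phi a) (fun _ e => hQ (esym e)).
exact: free_core hc' hl.
Qed.

Definition Dirty v j := [/\ A0 v, (forall a, lastc a j -> phi (v * a) = 0) &
  Dfree v (fun x => x <> j)].

Lemma shift v Q j al : A0 v -> Dfree v Q -> Q j -> Ai j al -> phi al = 0 ->
  Dirty (v * al) j.
Proof.
move=> hv hD hQ ha h0; split.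
- exact: A0_mul hv (Ai_A0 ha).
- move=> a hl; have := hD 1%N (fun _ => j) (fun _ => al) a isT.
  rewrite big_nat1; apply => //; split => //; by case.
- move=> m ic c a hm hc hQ' hl; have := hD m.+1 (ncons j ic) (ncons al c) a isT.
  rewrite prod_ncons mulrA; apply => //.
    exact: CS_cons hc ha h0 (fun _ e => hQ' (esym e)).
  by case: m hm hc hQ' hl.
Qed.

Lemma Dirty_shift v j j' al : Dirty v j -> Ai j' al -> phi al = 0 -> j' <> j ->
  Dirty (v * al) j'.
Proof. by case=> hv _ hD ha h0 hj; apply: shift hv hD hj ha h0. Qed.

Lemma Dirty_phi v j : Dirty v j -> phi v = 0.
Proof. by case=> _ h _; rewrite -[v]mulr1; apply: h; left. Qed.

Lemma Dirty_A v j j' a : Dirty v j -> Ai j' a -> j' <> j -> phi (v * a) = 0.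
Proof. by case=> _ h _ ha hj; apply: h; right; exists j'. Qed.

Lemma phi_mul2 j j' a a' : Ai j a -> Ai j' a' -> j <> j' -> phi (a * a') = phi a * phi a'.
Proof.
move=> ha ha' hj; rewrite {1}(cenE a) mulrDl -scalerAl mul1r phiD phiZ.
have := Dfree1 (m := 1%N) (ic := fun _ => j) (c := fun _ => cen a) (a := a') isT.
rewrite big_nat1 mul1r => ->; first by rewrite add0r.
- by split; [case | move=> k _; split; [apply: cen_A | apply: cen_phi]].
- by [].
- by right; exists j'; split => // e; apply: hj; rewrite e.
Qed.

Definition Word j x := exists a0 am chi l y,
  [/\ Ai j a0, Ai j am, Chain (Ai j) (Fi j) l y chi & x = a0 * chi * am].
Definition S0 j x := (Ai j x /\ phi x = 0) \/ Word j x.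
Definition Sfull j x := Ai j x \/ Word j x.

Lemma Sfull_mul j x y : Sfull j x -> Sfull j y -> Sfull j (x * y).
Proof.
have [[_ _ _ hM] h1 _] := HAi j.
case=> [hx|[a0 [am [chi [l [z [h0 hm hc ->]]]]]]] [hy|[a0' [am' [chi' [l' [z' [h0' hm' hc' ->]]]]]]].
- by left; apply: hM.
- right; exists (x * a0'), am', chi', l', z'; split => //; first exact: hM.
  by rewrite !mulrA.
- right; exists a0, (am * y), chi, l, z; split => //; first exact: hM.
  by rewrite !mulrA.
- right; exists a0, am', (chi * (am * a0') * chi'), (l * phi (am * a0') * l'), (z * z').
  split => //; first by apply: chain_cat => //; apply: hM.
  by rewrite !mulrA.
Qed.

Lemma genAF_span j x : gen_AF (Ai j) (Fi j) x -> Span (Sfull j) x.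
Proof.
have [[h0 _ _ _] h1 _] := HAi j.
elim=> [y [a [f [ha hf ->]]]||||].
- apply: sp_add; first by apply: sp_base; left.
  apply: sp_base; right; exists 1, 1, f, 1, f; split => //; last by rewrite mul1r mulr1.
  exact: ch_base.
- exact: sp_zero.
- by move=> *; apply: sp_add.
- by move=> *; apply: sp_scale.
- by move=> *; apply: Span_mul => //; apply: Sfull_mul.
Qed.

Lemma Word_F j x : Word j x -> F x.
Proof.
case=> a0 [am [chi [l [z [h0 hm hc ->]]]]].
have hF := chain_F (proj2 (HFi j)) hc.
have [h _] := F_ideal a0 hF; by have [_ ?] := F_ideal am h.
Qed.

Lemma span_dec j x : Span (Sfull j) x -> exists a w, [/\ Ai j a, Span (Word j) w & x = a + w].
Proof.
have [[h0 hD hZ _] h1 _] := HAi j.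
elim=> [y [hy|hy]|| x1 x2 _ [a1 [w1 [ha1 hw1 ->]]] _ [a2 [w2 [ha2 hw2 ->]]]|c y _ [a [w [ha hw ->]]]].
- by exists y, 0; split => //; [exact: sp_zero|rewrite addr0].
- by exists 0, y; split => //; [exact: sp_base|rewrite add0r].
- by exists 0, 0; split => //; [exact: sp_zero|rewrite addr0].
- exists (a1 + a2), (w1 + w2); split; [exact: hD|exact: sp_add|].
  by rewrite addrACA.
- by exists (c *: a), (c *: w); split; [exact: hZ|exact: sp_scale|rewrite scalerDr].
Qed.

Lemma spanW_F j w : Span (Word j) w -> F w.
Proof.
have [h0 hD hZ _] := F_sub.
elim=> [y /Word_F //||*|*]; [exact: h0|exact: hD|exact: hZ].
Qed.

Lemma span_S0 j x : gen_AF (Ai j) (Fi j) x -> phi x = 0 -> Span (S0 j) x.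
Proof.
move=> /genAF_span /span_dec [a [w [ha hw ->]]].
rewrite phiD (phiF (spanW_F hw)) addr0 => h.
apply: sp_add; first by apply: sp_base; left.
by apply: Span_mono hw => y hy; right.
Qed.

Lemma psiD x y : psi (x + y) = psi x + psi y.
Proof. by rewrite /phiP mulrDr (linD Phi_lin) mulrDl. Qed.
Lemma psiZ c x : psi (c *: x) = c * psi x.
Proof. by rewrite /phiP -scalerAr (linZ Phi_lin) mulrA. Qed.

Lemma mult_split (U V : B) c x y : U * (c *: x + y) * V = c *: (U * x * V) + U * y * V.
Proof. by rewrite mulrDr mulrDl -scalerAr -scalerAl. Qed.

Lemma ml1 n : multilin n (fun b => phi (\prod_(0 <= k < n) b k)).
Proof.
move=> m b c x y hm; rewrite !prod_upd // mult_split phiD phiZ //.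
Qed.

Lemma ml2 n : multilin n (fun b => psi (\prod_(0 <= k < n) b k) - \prod_(0 <= k < n) psi (b k)).
Proof.
move=> m b c x y hm; rewrite !prod_upd // !(prod_upd_map psi) // mult_split psiD psiZ psiD psiZ.
ring.
Qed.

Lemma free_S0 n i b : (0 < n)%N -> alternating n i ->
  (forall k, (k < n)%N -> S0 (i k) (b k)) -> phi (\prod_(0 <= k < n) b k) = 0.
Proof.
move=> hn ha hb.
case: (classic (exists k, (k < n)%N /\ Word (i k) (b k))) => [[k [hk hw]]|hno].
  rewrite (prod_split _ hk); apply: phiF.
  have [h _] := F_ideal (\prod_(0 <= k0 < k) b k0) (Word_F hw).
  by have [_ ?] := F_ideal (\prod_(k.+1 <= k0 < n) b k0) h.
apply: Hfree hn ha _ => k hk; case: (hb k hk) => // hw.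
by exfalso; apply: hno; exists k.
Qed.

Lemma cf_free : Defs.free (fun i => gen_AF (Ai i) (Fi i)) phi.
Proof.
move=> n i b hn ha hb.
have := @multilin_ext K B n _ (fun k => S0 (i k)) (@ml1 n); apply.
  by move=> b' hb' /=; exact: free_S0 hn ha hb'.
by move=> k hk; have [h1 h2] := hb k hk; apply: span_S0.
Qed.

Lemma Word_glob j x : Word j x -> exists a0 am chi l y,
  [/\ Ai j a0, Ai j am, Chain A0 F0 l y chi, Fi j y & x = a0 * chi * am].
Proof.
case=> a0 [am [chi [l [y [h0 hm hc ->]]]]]; exists a0, am, chi, l, y; split => //.
  by apply: chain_mono hc => z; [apply: Ai_A0|apply: Fi_F0].
exact: chain_y (proj1 (HFi j)) hc.
Qed.

Definition Inv (i : nat -> I) (b : nat -> B) m :=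
 (Dirty (\prod_(0 <= k < m) b k) (i m.-1) /\ \prod_(0 <= k < m) psi (b k) = 0)
 \/ (exists v0 chi l y v, [/\ \prod_(0 <= k < m) b k = v0 * chi * v, Chain A0 F0 l y chi,
        A0 v0, \prod_(0 <= k < m) psi (b k) = 0 &
        (phi v0 * l = 0 /\ Ai (i m.-1) v) \/ Dirty v (i m.-1)])
 \/ (exists v0 chi l v yy, [/\ \prod_(0 <= k < m) b k = v0 * chi * v,
        Chain A0 F0 l (\prod_(0 <= k < m) yy k) chi, A0 v0, Ai (i m.-1) v &
        (forall k, (k < m)%N -> Fi (i k) (yy k)) /\
        \prod_(0 <= k < m) psi (b k) = phi v0 * l * phi v * \prod_(0 <= k < m) psi (yy k)]).

Lemma psi_al j a : Ai j a -> phi a = 0 -> psi a = 0.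
Proof. by move=> ha h; rewrite psi_A0 //; apply: Ai_A0 ha. Qed.

Lemma Inv1 i b : S0 (i 0%N) (b 0%N) -> Inv i b 1.
Proof.
rewrite /Inv !big_nat1 /=; case=> [[ha h0]|/Word_glob [a0 [am [chi [l [y [h0 hm hc hy ->]]]]]]].
  left; split; last exact: psi_al ha h0.
  rewrite -[b 0%N]mul1r; exact: (shift A0_1 Dfree1 Logic.I ha h0).
right; right; exists a0, chi, l, am, (fun _ => y); split => //.
- by rewrite big_nat1.
- exact: Ai_A0 h0.
- split; first by case.
  by rewrite (psi_word hc (Ai_A0 h0) (Ai_A0 hm)) big_nat1.
Qed.

Lemma InvS i b m : i m <> i m.+1 -> S0 (i m.+1) (b m.+1) -> Inv i b m.+1 -> Inv i b m.+2.
Proof.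
move=> hne hS; rewrite /Inv /= !(big_nat_recr (m.+1) 0%N) //=.
have hne' : i m.+1 <> i m by move=> e; apply: hne; rewrite e.
case: hS => [[ha h0]|/Word_glob [a0 [am [chi' [l' [y' [h0 hm hc' hy' ->]]]]]]].
  rewrite (psi_al ha h0) !mulr0.
  case=> [[hD _]|[[v0 [chi [l [y [v [-> hc hv0 _ hor]]]]]]|[v0 [chi [l [v [yy [-> hc hv0 hv _]]]]]]]].
  - by left; split => //; apply: Dirty_shift hD ha h0 hne'.
  - right; left; exists v0, chi, l, y, (v * b m.+1); split => //; first by rewrite !mulrA.
    right; case: hor => [[_ hv]|hD]; last exact: Dirty_shift hD ha h0 hne'.
    by exact: (shift (Ai_A0 hv) (Dfree_a hv) hne' ha h0).
  - right; left; exists v0, chi, l, (\prod_(0 <= k < m.+1) yy k), (v * b m.+1); split => //; first by rewrite !mulrA.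
    by right; exact: (shift (Ai_A0 hv) (Dfree_a hv) hne' ha h0).
case=> [[hD hT]|[[v0 [chi [l [y [v [-> hc hv0 hT hor]]]]]]|[v0 [chi [l [v [yy [-> hc hv0 hv [hyy hT]]]]]]]]].
- right; left; exists (\prod_(0 <= k < m.+1) b k * a0), chi', l', y', am; split => //.
  + by rewrite !mulrA.
  + by case: hD => hA _ _; apply: A0_mul hA (Ai_A0 h0).
  + by rewrite hT mul0r.
  + by left; split => //; rewrite (Dirty_A hD h0 hne') mul0r.
- have hvA : A0 v by case: hor => [[_ /Ai_A0]|[]].
  right; left; exists v0, (chi * (v * a0) * chi'), (l * phi (v * a0) * l'), (y * y'), am.
  split => //.
  + by rewrite !mulrA.
  + by apply: chain_cat => //; apply: A0_mul hvA (Ai_A0 h0).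
  + by rewrite hT mul0r.
  + left; split => //; case: hor => [[e _]|hD].
      by rewrite !mulrA e !mul0r.
    by rewrite (Dirty_A hD h0 hne') mulr0 mul0r mulr0.
- right; right; exists v0, (chi * (v * a0) * chi'), (l * phi (v * a0) * l'), am, (upd yy m.+1 y').
  split => //.
  + by rewrite !mulrA.
  + rewrite prod_snoc; apply: chain_cat => //; apply: A0_mul (Ai_A0 hv) (Ai_A0 h0).
  + split.
      move=> k hk; rewrite /upd; case: (k =P m.+1) => [->//|ne].
      by apply: hyy; rewrite ltn_neqAle -ltnS hk andbT; apply/eqP.
    rewrite (prod_snoc_map psi) hT (psi_word hc' (Ai_A0 h0) (Ai_A0 hm)).
    rewrite (phi_mul2 hv h0 (fun e => hne' (esym e))); ring.
Qed.

Lemma bool_S0 (Hbool : boolean_indep Fi psi) n i b : (0 < n)%N -> alternating n i ->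
  (forall k, (k < n)%N -> S0 (i k) (b k)) ->
  psi (\prod_(0 <= k < n) b k) = \prod_(0 <= k < n) psi (b k).
Proof.
move=> hn ha hb.
have inv : forall m, (m < n)%N -> Inv i b m.+1.
  elim=> [_|m IH hm]; first exact: Inv1 (hb 0%N hn).
  apply: InvS; [exact: ha|exact: hb|apply: IH; exact: ltnW].
case: n hn ha hb inv => // n _ ha hb inv.
case: (inv n (ltnSn n)) => [[hD hT]|[[v0 [chi [l [y [v [-> hc hv0 hT hor]]]]]]|[v0 [chi [l [v [yy [-> hc hv0 hv [hyy hT]]]]]]]]].
- by case: (hD) => hA _ _; rewrite hT psi_A0 // (Dirty_phi hD).
- have hvA : A0 v by case: hor => [[_ /Ai_A0]|[]].
  rewrite hT (psi_word hc hv0 hvA); case: hor => [[e _]|hD].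
    by rewrite e !mul0r.
  by rewrite (Dirty_phi hD) mulr0 mul0r.
- by rewrite hT (psi_word hc hv0 (Ai_A0 hv)) (Hbool n.+1 i yy isT ha hyy).
Qed.

Lemma main_sec : cond_free (fun i => gen_AF (Ai i) (Fi i)) phi psi <-> boolean_indep Fi psi.
Proof.
split.
- case=> _ h n i c hn ha hc; apply: (h n i c) => //.
  move=> k hk; split.
    have [[h0 _ _ _] _ _] := HAi (i k); rewrite /gen_AF.
    by apply: gen_base => /=; exists 0, (c k); split => //; [exact: hc|rewrite add0r].
  exact: phiF (proj2 (HFi (i k)) _ (hc k hk)).
- move=> hb; split; first exact: cf_free.
  move=> n i b hn ha hbk; apply/eqP; rewrite -subr_eq0; apply/eqP.
  have := @multilin_ext K B n _ (fun k => S0 (i k)) (@ml2 n); apply.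
    by move=> b' hb' /=; rewrite (bool_S0 hb hn ha hb') subrr.
  by move=> k hk; have [h1 h2] := hbk k hk; apply: span_S0.
Qed.

End Main.

Unset Implicit Arguments.
Set Strict Implicit.

Theorem theorem4p3 (R : realType) (B : algType R[i])
    (A F : B -> Prop) (phi Phi : B -> R[i])
    (I : Type) (Ai Fi : I -> B -> Prop) (P : B) :
  is_ncpsB' A F phi Phi ->
  (forall i, [/\ subalg (Ai i), Ai i 1 & forall x, Ai i x -> A x]) ->
  (forall i, subalg (Fi i) /\ forall x, Fi i x -> F x) ->
  F P -> Phi P != 0 ->
  weakly_B'_free Ai
    (fun j : option I => match j with Some i => Fi i | None => F_P P end)
    phi Phi ->
  (cond_free (fun i => gen_AF (Ai i) (Fi i)) phi (phiP Phi P) <->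
   boolean_indep Fi (phiP Phi P)).
Proof.
move=> Hn HA HF HP HPhi Hw; move: Hw; rewrite /weakly_B'_free => -[Hfree Hwf].
by eapply main_sec; eassumption.
Qed.
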